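(* Let $(P_n(x))_{n\ge0}$ be a sequence of polynomials such that $\sum_{n\ge0}P_n(x)\frac{t^n}{n!}=f(t)e^{xt}$ for some $f$ holomorphic at $0$ with $f(0)\neq0$, and such that $P_n(1-x)=(-1)^nP_n(x)$ for all $n\ge0$. Let $N$ be a positive integer. If the function $F(t)=f(t)-\sum_{k=0}^{N}B_k(0)\frac{t^k}{k!}$ is even, then $P_n(x)=B_n(x)$ for all $n\ge0$ and $f(t)=\frac{t}{e^t-1}$.
   Context: $B_n(x)$ denotes the Bernoulli polynomials, defined by $\sum_{n\ge0}B_n(x)\frac{t^n}{n!}=\frac{te^{xt}}{e^t-1}$; $B_k(0)$ are the Bernoulli numbers. *)

(* Defs.v *)
From mathcomp Require Import all_boot all_algebra complex.
From mathcomp Require Export reals.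
Set Implicit Arguments. Unset Strict Implicit. Unset Printing Implicit Defensive.
Import GRing.Theory Num.Theory.
Local Open Scope ring_scope.

(* Formal power series in t are represented by their (ordinary) coefficient
   sequences  a : nat -> A, i.e.  a(t) = \sum_k a k t^k. *)

Definition fps_mul (A : comNzRingType) (a b : nat -> A) (n : nat) : A :=
  \sum_(i < n.+1) a i * b (n - i)%N.

Definition exp_xt (F : fieldType) (j : nat) : {poly F} := (j`!%:R)^-1 *: 'X^j.

Definition expm1_coef (F : fieldType) (j : nat) : F :=
  if (0 < j)%N then (j`!%:R)^-1 else 0.

(* Bernoulli numbers B_k = B_k(0), computed by the recurrence equivalent to
   the generating function t/(e^t-1) = \sum_k B_k t^k/k!, namely
   B_0 = 1 and \sum_(k <= n) 'C(n+1,k) B_k = 0 for n >= 1. *)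
Fixpoint bern_seq (F : fieldType) (n : nat) : seq F :=
  match n with
  | 0 => [:: 1]
  | m.+1 => let s := bern_seq F m in
            rcons s (- (m.+2%:R)^-1 * \sum_(k < m.+1) 'C(m.+2, k)%:R * s`_k)
  end.

Definition bernoulli (F : fieldType) (n : nat) : F := (bern_seq F n)`_n.

Definition bernoulli_poly (F : fieldType) (n : nat) : {poly F} :=
  \sum_(k < n.+1) ('C(n, k)%:R * bernoulli F k) *: 'X^(n - k).

(* Main.v *)
Require Import Defs.
From mathcomp Require Import all_boot all_algebra complex.
From Stdlib Require Import FunctionalExtensionality.
From mathcomp Require Import ring.
Import GRing.Theory Num.Theory.
Local Open Scope ring_scope.

Section Fps.
Variable F : numFieldType.
Implicit Types a b c : nat -> F.

Definition pl (n : nat) a : {poly F} := \poly_(i < n.+1) a i.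
Lemma pl_coef n a j : (j <= n)%N -> (pl n a)`_j = a j.
Proof. by move=> h; rewrite /pl coef_poly ltnS h. Qed.

Lemma fps_agree n a b (p q : {poly F}) :
  (forall j, (j <= n)%N -> p`_j = a j) -> (forall j, (j <= n)%N -> q`_j = b j) ->
  fps_mul a b n = (p * q)`_n.
Proof.
move=> hp hq; rewrite /fps_mul coefM; apply: eq_bigr => i _.
rewrite hp ?hq // ?leq_subr //; by rewrite -ltnS.
Qed.

Lemma fps_mulC a b n : fps_mul a b n = fps_mul b a n.
Proof.
rewrite (@fps_agree n _ _ (pl n a) (pl n b)); try by move=> j hj; rewrite pl_coef.
rewrite (@fps_agree n _ _ (pl n b) (pl n a)); try by move=> j hj; rewrite pl_coef.
by rewrite mulrC.
Qed.

Lemma fps_mulA a b c n : fps_mul (fps_mul a b) c n = fps_mul a (fps_mul b c) n.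
Proof.
rewrite (@fps_agree n _ _ (pl n a * pl n b) (pl n c)); last first.
- by move=> j hj; rewrite pl_coef.
- by move=> j hj; rewrite (@fps_agree j _ _ (pl n a) (pl n b)) // => k hk;
     rewrite pl_coef // (leq_trans hk hj).
rewrite (@fps_agree n _ _ (pl n a) (pl n b * pl n c)); last first.
- by move=> j hj; rewrite (@fps_agree j _ _ (pl n b) (pl n c)) // => k hk;
     rewrite pl_coef // (leq_trans hk hj).
- by move=> j hj; rewrite pl_coef.
by rewrite mulrA.
Qed.

Lemma fps_mulDr a b c n : fps_mul a (fun j => b j + c j) n = fps_mul a b n + fps_mul a c n.
Proof. by rewrite /fps_mul -big_split; apply: eq_bigr => i _; rewrite mulrDr. Qed.

Lemma fps_mulNr a b n : fps_mul a (fun j => - b j) n = - fps_mul a b n.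
Proof. by rewrite /fps_mul -sumrN; apply: eq_bigr => i _; rewrite mulrN. Qed.

Definition delta m : nat -> F := fun j => (j == m)%:R.

Lemma fps_mul_delta0 a n : fps_mul a (delta 0) n = a n.
Proof.
rewrite /fps_mul big_ord_recr /= subnn /delta eqxx mulr1 big1 ?add0r // => i _.
by rewrite subn_eq0 leqNgt ltn_ord mulr0.
Qed.

Definition refl a : nat -> F := fun j => (-1) ^+ j * a j.

Lemma fps_mul_refl a b n : fps_mul (refl a) (refl b) n = (-1) ^+ n * fps_mul a b n.
Proof.
rewrite /fps_mul mulr_sumr; apply: eq_bigr => i _; rewrite /refl.
have hi : (i <= n)%N by rewrite -ltnS.
have -> : (-1) ^+ n = (-1) ^+ i * (-1) ^+ (n - i) :> F by rewrite -exprD subnKC.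
by rewrite mulrACA.
Qed.


Lemma fps_mulBr a b c n : fps_mul a (fun j => b j - c j) n = fps_mul a b n - fps_mul a c n.
Proof. by rewrite /fps_mul -sumrB; apply: eq_bigr => i _; rewrite mulrBr. Qed.

Lemma fps_mulBl a b c n : fps_mul (fun j => a j - b j) c n = fps_mul a c n - fps_mul b c n.
Proof. by rewrite /fps_mul -sumrB; apply: eq_bigr => i _; rewrite mulrBl. Qed.

Definition sE : nat -> F := fun j => (j`!%:R)^-1.

Lemma fact_neq0 j : (j`!%:R : F) != 0.
Proof. by rewrite pnatr_eq0 -lt0n fact_gt0. Qed.

Lemma inv_fact2 i n : (i <= n)%N ->
  (i`!%:R : F)^-1 * ((n - i)`!%:R)^-1 = 'C(n, i)%:R / n`!%:R.
Proof.
move=> hi; rewrite -(bin_fact hi) !natrM invfM mulrA mulfV ?mul1r ?invfM //.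
by rewrite pnatr_eq0 -lt0n bin_gt0.
Qed.

Lemma e1E j : expm1_coef F j = sE j - delta 0 j.
Proof.
rewrite /expm1_coef /sE /delta; case: j => [|j] /=; first by rewrite invr1 subrr.
by rewrite subr0.
Qed.

Lemma reflE_E n : fps_mul (refl sE) sE n = delta 0 n.
Proof.
rewrite /fps_mul /refl /sE.
transitivity ((n`!%:R)^-1 * (1 - 1 : F) ^+ n); last first.
  by rewrite subrr expr0n /delta; case: n => [|n] /=; rewrite ?invr1 ?mul1r ?mulr0.
rewrite exprBn mulr_sumr; apply: eq_bigr => i _.
have hi : (i <= n)%N by rewrite -ltnS.
rewrite !expr1n !mulr1 -mulrA inv_fact2 // -mulr_natl; field.
exact: fact_neq0.
Qed.

Definition bb (k : nat) : F := bernoulli F k / k`!%:R.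

Lemma size_bern m : size (bern_seq F m) = m.+1.
Proof. by elim: m => [|m IH] //=; rewrite size_rcons IH. Qed.

Lemma bern_prefix m k : (k <= m)%N -> (bern_seq F m)`_k = bernoulli F k.
Proof.
elim: m => [|m IH]; first by rewrite leqn0 => /eqP ->.
rewrite leq_eqVlt => /orP [/eqP -> //|hk].
by rewrite /= nth_rcons size_bern hk IH.
Qed.

Lemma bern_rec m : \sum_(k < m.+2) ('C(m.+2, k)%:R * bernoulli F k) = 0.
Proof.
rewrite big_ord_recr /= binSn.
have -> : bernoulli F m.+1 = - (m.+2%:R)^-1 * \sum_(k < m.+1) 'C(m.+2, k)%:R * bernoulli F k.
  rewrite /bernoulli /= nth_rcons size_bern ltnn eqxx; congr (_ * _).
  by apply: eq_bigr => k _; rewrite bern_prefix // -ltnS.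
rewrite mulrA mulrN mulfV ?pnatr_eq0 // mulN1r; apply: subrr.
Qed.

Lemma bern0 : bernoulli F 0 = 1.
Proof. by []. Qed.

Lemma bb_e1 n : fps_mul bb (@expm1_coef F) n = delta 1 n.
Proof.
rewrite /fps_mul big_ord_recr /= subnn /expm1_coef /= mulr0 addr0.
case: n => [|m]; first by rewrite big_ord0.
transitivity ((m.+1`!%:R)^-1 * \sum_(i < m.+1) ('C(m.+1, i)%:R * bernoulli F i)).
  rewrite mulr_sumr; apply: eq_bigr => i _ /=.
  have hi : (i <= m.+1)%N by rewrite ltnW.
  rewrite subn_gt0 ltn_ord /bb -mulrA inv_fact2 //; field; exact: fact_neq0.
case: m => [|m].
  by rewrite big_ord1 bern0 /delta /= !mulr1 invr1.
by rewrite bern_rec mulr0 /delta.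
Qed.

Lemma e1_cancel a : (forall n, fps_mul a (@expm1_coef F) n = 0) -> forall n, a n = 0.
Proof.
move=> H.
suff: forall n m, (m < n)%N -> a m = 0 by move=> h n; apply: (h n.+1).
elim=> [//|n IH] m; rewrite ltnS leq_eqVlt => /orP [/eqP ->|]; last exact: IH.
have := H n.+1; rewrite /fps_mul big_ord_recr big_ord_recr /= subnn subSnn.
rewrite big1 ?add0r; last by move=> i _; rewrite IH ?mul0r //=.
by rewrite /expm1_coef /= invr1 mulr1 mulr0 addr0.
Qed.


Lemma fps_mul_e1 a n : fps_mul a (@expm1_coef F) n = fps_mul a sE n - a n.
Proof.
have -> : @expm1_coef F = fun j => sE j - delta 0 j by apply: functional_extensionality => j; rewrite e1E.
by rewrite fps_mulBr fps_mul_delta0.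
Qed.

Lemma delta1_sign n : (-1) ^+ n * delta 1 n = - delta 1 n.
Proof. by case: n => [|[|n]]; rewrite /delta /= ?mulr0 ?oppr0 ?expr1 ?mulr1. Qed.

Lemma bb_refl n : refl bb n = bb n + delta 1 n.
Proof.
set h := refl bb.
have S1 : forall n, fps_mul h (refl sE) n = h n - delta 1 n.
  move=> m; have := fps_mul_refl bb (@expm1_coef F) m; rewrite bb_e1 delta1_sign.
  have -> : refl (@expm1_coef F) = fun j => refl sE j - delta 0 j.
    apply: functional_extensionality => j; rewrite /refl e1E mulrBr.
    by case: j => [|j]; rewrite /delta /= ?expr0 ?mul1r ?mulr0.
  rewrite fps_mulBr fps_mul_delta0 => /eqP; rewrite subr_eq => /eqP ->.
  by rewrite addrC.
have S2 : forall n, h n = fps_mul h sE n - fps_mul (delta 1) sE n.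
  move=> n0; rewrite -{1}(fps_mul_delta0 h n0).
  have -> : delta 0 = fps_mul (refl sE) sE by apply: functional_extensionality => j; rewrite reflE_E.
  rewrite -fps_mulA.
  have -> : fps_mul h (refl sE) = fun j => h j - delta 1 j by apply: functional_extensionality.
  by rewrite fps_mulBl.
pose a := fun j => h j - bb j - delta 1 j.
have Ha : forall m, fps_mul a (@expm1_coef F) m = 0.
  move=> m; rewrite /a !fps_mulBl bb_e1 !fps_mul_e1 (S2 m).
  ring.
have := e1_cancel a Ha n; rewrite /a => /eqP; rewrite !subr_eq => /eqP ->.
by rewrite add0r addrC.
Qed.


Lemma neg_self (x : F) : - x = x -> x = 0.
Proof.
move=> h; apply/eqP; have : x *+ 2 == 0 by rewrite mulr2n -{1}h addNr.
by rewrite mulrn_eq0.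
Qed.

Lemma bb_odd k : odd k -> k != 1%N -> bb k = 0.
Proof.
move=> ho hk; have := bb_refl k; rewrite /refl /delta (negPf hk) addr0.
by rewrite -signr_odd ho expr1 mulN1r; apply: neg_self.
Qed.

Lemma eval_fps (c : nat -> F) n x :
  (fps_mul (fun k => (c k)%:P) (@exp_xt F) n).[x] =
  \sum_(i < n.+1) c i * (sE (n - i) * x ^+ (n - i)).
Proof.
rewrite /fps_mul horner_sum; apply: eq_bigr => i _.
by rewrite /exp_xt mul_polyC !hornerZ hornerXn.
Qed.

End Fps.

Lemma main_gen (F : numFieldType) (P : nat -> {poly F}) (c : nat -> F)
  (N : nat) :
  (forall n, (n`!%:R)^-1 *: P n = fps_mul (fun k => (c k)%:P) (@exp_xt F) n) ->
  (forall n (x : F), (P n).[1 - x] = (-1) ^+ n * (P n).[x]) ->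
  (0 < N)%N ->
  (let Fc k := c k - (if (k <= N)%N then bernoulli F k / k`!%:R else 0) in
   forall k, (-1) ^+ k * Fc k = Fc k) ->
  (forall n, P n = bernoulli_poly F n) /\
  (forall n, fps_mul c (@expm1_coef F) n = (n == 1%N)%:R).
Proof.
move=> H3 H4 HN H6.
have HP : forall n, P n = n`!%:R *: fps_mul (fun k => (c k)%:P) (@exp_xt F) n.
  by move=> n; rewrite -H3 scalerA mulfV ?scale1r // fact_neq0.
have S1 : forall n, fps_mul c (sE F) n = (-1) ^+ n * c n.
  move=> n; have := H4 n 0; rewrite subr0 HP !hornerZ !eval_fps.
  have e1' : \sum_(i < n.+1) c i * (sE F (n - i) * 1 ^+ (n - i)) = fps_mul c (sE F) n.
    by apply: eq_bigr => i _; rewrite expr1n mulr1.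
  rewrite e1' => h.
  have {}h : n`!%:R * fps_mul c (sE F) n = n`!%:R * ((-1) ^+ n * \sum_(i < n.+1) c i * (sE F (n - i) * 0 ^+ (n - i))).
    by rewrite h mulrCA.
  rewrite (mulfI (fact_neq0 F n) h).
  rewrite big_ord_recr /= subnn big1 ?add0r; last first.
    by move=> i _; rewrite expr0n subn_eq0 leqNgt ltn_ord /= !mulr0.
  by rewrite /sE /= invr1 !mulr1.
move: H6 => /= H6.
have Hodd : forall k, odd k -> c k = bb F k.
  move=> k hk; have := H6 k; rewrite -signr_odd hk expr1 mulN1r => /neg_self /eqP.
  rewrite subr_eq0 => /eqP ->.
  case: ifP => hkN; first by [].
  rewrite bb_odd //; apply/eqP => k1; by rewrite k1 HN in hkN.
have Hr : forall k, (-1) ^+ k * c k - c k = delta F 1 k.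
  move=> k; case ho: (odd k).
    by rewrite Hodd //; have := bb_refl F k; rewrite /refl => ->; ring.
  rewrite -signr_odd ho expr0 mul1r subrr /delta; case: eqP => // k1.
  by rewrite k1 in ho.
have Hc1 : forall n, fps_mul c (@expm1_coef F) n = delta F 1 n.
  by move=> n; rewrite fps_mul_e1 S1 Hr.
have Hcb : c = bb F.
  apply: functional_extensionality => k; apply/eqP; rewrite -subr_eq0; apply/eqP.
  apply: (@e1_cancel F (fun j => c j - bb F j) _ k) => n.
  by rewrite fps_mulBl Hc1 bb_e1 subrr.
split; last exact: Hc1.
move=> n; rewrite HP Hcb /bernoulli_poly /fps_mul scaler_sumr; apply: eq_bigr => i _.
rewrite /exp_xt mul_polyC !scalerA; congr (_ *: _).
have hi : (i <= n)%N by rewrite -ltnS.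
rewrite /bb -!mulrA inv_fact2 //; field; exact: fact_neq0.
Qed.

Theorem mainTheorem5 (R : realType) (P : nat -> {poly R[i]}) (c : nat -> R[i])
  (N : nat) :
  (exists r : R[i], exists M : R[i], 0 < r /\ forall k, `|c k| * r ^+ k <= M) ->
  c 0%N != 0 ->
  (forall n, (n`!%:R)^-1 *: P n = fps_mul (fun k => (c k)%:P) (@exp_xt _) n) ->
  (forall n (x : R[i]), (P n).[1 - x] = (-1) ^+ n * (P n).[x]) ->
  (0 < N)%N ->
  (let Fc k := c k - (if (k <= N)%N then bernoulli _ k / k`!%:R else 0) in
   forall k, (-1) ^+ k * Fc k = Fc k) ->
  (forall n, P n = bernoulli_poly _ n) /\
  (forall n, fps_mul c (@expm1_coef _) n = (n == 1%N)%:R).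
Proof.
move=> _ _; exact: main_gen.
Qed.
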